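(* Consider the implicit scheme and the semi-implicit scheme of the ISPH method described in the context. Suppose that, for every $k=0,1,\dots,K-1$, the particle distribution $X^k=\{x^k_1,\dots,x^k_N\}$ (with its partition $\{1,\dots,N\}=\Lambda_F^k\cup\Lambda_S^k\cup\Lambda_W^k$) satisfies the $h$-connectivity condition. Then both the implicit scheme and the semi-implicit scheme have a unique solution, i.e. at every step $k=0,\dots,K-1$ the equations of the step uniquely determine $\tilde u^{k+1}$, $p^{k+1}$ and $u^{k+1}$.
   Context: Let $d\in\{2,3\}$, $\Omega\subset\mathbb{R}^d$ a bounded domain with smooth boundary, $|\Omega|$ its volume. Fix $\rho>0$ (density), $\nu>0$ (viscosity), $T>0$, a body force $f:\overline\Omega\times[0,T]\to\mathbb{R}^d$ and an initial velocity $u_0:\overline\Omega\to\mathbb{R}^d$. Let $\Delta t>0$, $K=\lfloor T/\Delta t\rfloor$, $t^k=k\Delta t$. Reference weight function: $w\in C^2([0,\infty))$ such that for some $r_0>0$: $w(r)>0$ for $0<r<r_0$, $w(r)=0$ for $r\ge r_0$; $\dot w(r)<0$ for $0<r<r_0$, $\dot w(r)=0$ for $r=0$ or $r\ge r_0$; and $\int_{\mathbb{R}^d}w(|x|)\,dx=1$. For a smoothing length $h>0$ put $w_h(r)=h^{-d}w(r/h)$ with derivative $\dot w_h$, and for $x\neq y$ write $\nabla w_h(|x-y|)=\dot w_h(|x-y|)\frac{x-y}{|x-y|}$ (gradient in $x$), with $\nabla w_h(0):=0$. Particles: $N\in\mathbb{N}$, particle volumes $V_1,\dots,V_N>0$ with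 $\sum_i V_i=|\Omega|$. At each time level $k$ there are pairwise distinct positions $x^k_1,\dots,x^k_N\in\overline\Omega$ with $r_0h>\min_{i\ne j}|x^k_i-x^k_j|$, and a partition of $I_N=\{1,\dots,N\}$ into disjoint sets $\Lambda^k_F$ (inner fluid particles), $\Lambda^k_S$ (free-surface particles), $\Lambda^k_W$ (wall particles). Set $f^k_i=f(x^k_i,t^k)$ for $i\in\Lambda_F^k\cup\Lambda_S^k$ and $f^k_i=0$ for $i\in\Lambda_W^k$. Positions are updated by $x^{k+1}_i=x^k_i+\Delta t\,u^{k+1}_i$. Discrete operators at level $k$ (all distances $|x^k_i-x^k_j|$, gradients $\nabla w_h(|x^k_i-x^k_j|)$): for vector data $v$, $(\Delta_h v)_i=2\sum_{j\ne i,\,j\in I_N}V_j\frac{v_i-v_j}{|x^k_i-x^k_j|}\frac{x^k_i-x^k_j}{|x^k_i-x^k_j|}\cdot\nabla w_h(|x^k_i-x^k_j|)$; $(\nabla_h\cdot v)_i=\sum_{j=1}^N V_j(v_j+v_i)\cdot\nabla w_h(|x^k_i-x^k_j|)$; for scalar $p$ defined on $\Lambda_F^k\cup\Lambda_S^k$, $(\nabla_h p)_i=\sum_{j\in\Lambda_F^k\cup\Lambda_S^k}V_j(p_j-p_i)\nabla w_h(|x^k_i-x^k_j|)$ and $(\Delta_h p)_i=2\sum_{j\in\Lambda_F^k\cup\Lambda_S^k\setminus\{i\}}V_j\frac{p_i-p_j}{|x^k_i-x^k_j|}\frac{x^k_i-x^k_j}{|x^k_i-x^k_j|}\cdot\nabla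 w_h(|x^k_i-x^k_j|)$. Implicit scheme: $u^0_i=u_0(x^0_i)$ ($i=1..N$), and for $k=0,\dots,K-1$ find $\tilde u^{k+1}\in(\mathbb{R}^d)^N$, $p^{k+1}\in\mathbb{R}^{\Lambda_F^k\cup\Lambda_S^k}$, $u^{k+1}\in(\mathbb{R}^d)^N$ with: (b) $\frac{\tilde u^{k+1}_i-u^k_i}{\Delta t}=\nu(\Delta_h\tilde u^{k+1})_i+f^k_i$ for $i\in\Lambda_F^k\cup\Lambda_S^k$, $\tilde u^{k+1}_i=0$ for $i\in\Lambda_W^k$; (c) $(\Delta_h p^{k+1})_i=\frac{\rho}{\Delta t}(\nabla_h\cdot\tilde u^{k+1})_i$ for $i\in\Lambda_F^k$, $p^{k+1}_i=0$ for $i\in\Lambda_S^k$; (d) $\frac{u^{k+1}_i-\tilde u^{k+1}_i}{\Delta t}=-\frac1\rho(\nabla_h p^{k+1})_i$ for $i\in\Lambda_F^k\cup\Lambda_S^k$, $u^{k+1}_i=0$ for $i\in\Lambda_W^k$. The semi-implicit scheme is identical except that (b) is replaced by $\frac{\tilde u^{k+1}_i-u^k_i}{\Delta t}=\nu(\Delta_h u^k)_i+f^k_i$ for $i\in\Lambda_F^k\cup\Lambda_S^k$, $\tilde u^{k+1}_i=0$ for $i\in\Lambda_W^k$. $h$-connectivity condition for $X^k$: for every $i\in\Lambda_F^k$ there exist finite sequences $i=i_1,i_2,\dots,i_\zeta$ and $i=i^*_1,\dots,i^*_{\zeta^*}$ in $I_N$ with $0<|x^k_{i_l}-x^k_{i_{l+1}}|<r_0h$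 and $i_l\in\Lambda_F^k$ for $1\le l<\zeta$, $i_\zeta\in\Lambda_S^k$; and $0<|x^k_{i^*_l}-x^k_{i^*_{l+1}}|<r_0h$ and $i^*_l\in\Lambda_F^k$ for $1\le l<\zeta^*$, $i^*_{\zeta^*}\in\Lambda_W^k$. *)

(* Defs.v *)
From HB Require Import structures.
From mathcomp Require Import all_boot all_order all_algebra.
From mathcomp Require Import all_classical all_reals all_analysis.
Set Implicit Arguments. Unset Strict Implicit. Unset Printing Implicit Defensive.
Import Order.TTheory GRing.Theory Num.Theory.
Import numFieldNormedType.Exports.
Local Open Scope classical_set_scope.
Local Open Scope ring_scope.

Section ISPH.
Variables (R : realType) (d : nat).

Definition dotv (a b : 'rV[R]_d) : R := \sum_(l < d) a 0 l * b 0 l.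
Definition enorm (a : 'rV[R]_d) : R := Num.sqrt (dotv a a).

Definition C2_nonneg (w dw d2w : R -> R) : Prop :=
  (forall r : R, 0 < r -> is_derive r (1 : R) w (dw r)) /\
  (forall r : R, 0 < r -> is_derive r (1 : R) dw (d2w r)) /\
  ((fun t : R => t^-1 * (w t - w 0)) @ 0^'+ --> dw 0) /\
  ((fun t : R => t^-1 * (dw t - dw 0)) @ 0^'+ --> d2w 0) /\
  {within `[0, +oo[, continuous d2w}.

Definition radial_normalized (w : R -> R) : Prop :=
  if d == 2%N then
    (\int[(@lebesgue_measure R) \x (@lebesgue_measure R)]_(z in setT)
        (w (Num.sqrt (z.1 ^+ 2 + z.2 ^+ 2)))%:E = 1)%E
  else
    (\int[((@lebesgue_measure R) \x (@lebesgue_measure R)) \x (@lebesgue_measure R)]_(z in setT)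
        (w (Num.sqrt (z.1.1 ^+ 2 + z.1.2 ^+ 2 + z.2 ^+ 2)))%:E = 1)%E.

Definition weight_fun (w dw : R -> R) (r0 : R) : Prop :=
  0 < r0 /\ (exists d2w, C2_nonneg w dw d2w) /\
  (forall r, 0 < r < r0 -> 0 < w r) /\ (forall r, r0 <= r -> w r = 0) /\
  (forall r, 0 < r < r0 -> dw r < 0) /\ dw 0 = 0 /\ (forall r, r0 <= r -> dw r = 0) /\
  radial_normalized w.

(* derivative of w_h(r) = h^-d w(r/h) *)
Definition dwh (dw : R -> R) (h r : R) : R := h ^- d.+1 * dw (r / h).

(* grad w_h(|a - b|), with grad w_h(0) := 0 *)
Definition gradw (dw : R -> R) (h : R) (a b : 'rV[R]_d) : 'rV[R]_d :=
  if a == b then 0 else (dwh dw h (enorm (a - b)) / enorm (a - b)) *: (a - b).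

Variables (N : nat) (dw : R -> R) (h : R) (V : 'I_N -> R) (x : 'I_N -> 'rV[R]_d).

Local Notation gw i j := (gradw dw h (x i) (x j)).
Local Notation dist i j := (enorm (x i - x j)).

Definition lap_v (v : 'I_N -> 'rV[R]_d) (i : 'I_N) : 'rV[R]_d :=
  2 *: \sum_(j < N | j != i)
     ((V j / dist i j) * dotv ((dist i j)^-1 *: (x i - x j)) (gw i j)) *: (v i - v j).

Definition div_v (v : 'I_N -> 'rV[R]_d) (i : 'I_N) : R :=
  \sum_(j < N) V j * dotv (v j + v i) (gw i j).

Definition grad_p (FS : {set 'I_N}) (p : 'I_N -> R) (i : 'I_N) : 'rV[R]_d :=
  \sum_(j in FS) (V j * (p j - p i)) *: gw i j.

Definition lap_p (FS : {set 'I_N}) (p : 'I_N -> R) (i : 'I_N) : R :=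
  2 * \sum_(j in FS | j != i)
     V j * (p i - p j) / dist i j * dotv ((dist i j)^-1 *: (x i - x j)) (gw i j).

Definition step_eqs (implicit : bool) (LF LS LW : {set 'I_N})
    (rho nu dt : R) (fk : 'I_N -> 'rV[R]_d) (uk ut : 'I_N -> 'rV[R]_d)
    (p : 'I_N -> R) (un : 'I_N -> 'rV[R]_d) : Prop :=
  (forall i, i \in LF :|: LS ->
     dt^-1 *: (ut i - uk i) = nu *: lap_v (if implicit then ut else uk) i + fk i) /\
  (forall i, i \in LW -> ut i = 0) /\
  (forall i, i \in LF -> lap_p (LF :|: LS) p i = rho / dt * div_v ut i) /\
  (forall i, i \in LS -> p i = 0) /\
  (forall i, i \in LF :|: LS ->
     dt^-1 *: (un i - ut i) = - (rho^-1 *: grad_p (LF :|: LS) p i)) /\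
  (forall i, i \in LW -> un i = 0).

(* unique solvability of a step: existence, and uniqueness of ut, u and of
   p on LF ∪ LS (the set on which p is defined) *)
Definition uniquely_solvable implicit LF LS LW rho nu dt fk uk : Prop :=
  (exists ut p un, step_eqs implicit LF LS LW rho nu dt fk uk ut p un) /\
  (forall ut1 p1 un1 ut2 p2 un2,
     step_eqs implicit LF LS LW rho nu dt fk uk ut1 p1 un1 ->
     step_eqs implicit LF LS LW rho nu dt fk uk ut2 p2 un2 ->
     ut1 = ut2 /\ un1 = un2 /\ (forall i, i \in LF :|: LS -> p1 i = p2 i)).

Definition near_rel (r0 : R) : rel 'I_N :=
  fun a b => (0 < dist a b) && (dist a b < r0 * h).

Definition h_connected (r0 : R) (LF LS LW : {set 'I_N}) : Prop :=
  forall i, i \in LF ->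
    (exists s : seq 'I_N, [&& path (near_rel r0) i s,
        all (fun j => j \in LF) (belast i s) & last i s \in LS]) /\
    (exists s : seq 'I_N, [&& path (near_rel r0) i s,
        all (fun j => j \in LF) (belast i s) & last i s \in LW]).

End ISPH.

(* Main.v *)
Require Import Defs.
From HB Require Import structures.
From mathcomp Require Import all_boot all_order all_algebra.
From mathcomp Require Import all_classical all_reals all_analysis.
From mathcomp Require Import ring lra.
Import Order.TTheory GRing.Theory Num.Theory.
Import numFieldNormedType.Exports.
Local Open Scope classical_set_scope.
Local Open Scope ring_scope.
Set Implicit Arguments. Unset Strict Implicit. Unset Printing Implicit Defensive.

Section Generic.
Variables (R : realType) (N : nat) (U : {set 'I_N}) (c : 'I_N -> R)
  (g : 'I_N -> 'I_N -> R).
Hypothesis c_ge0 : forall i, 0 <= c i.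
Hypothesis g_ge0 : forall i j, 0 <= g i j.
Hypothesis reach : forall i, i \in U -> 0 < c i \/
  exists s, [&& path (fun a b => 0 < g a b) i s,
                all (fun j => j \in U) (belast i s) & last i s \notin U].

Definition gop (v : 'I_N -> R) i := c i * v i + \sum_(j < N) g i j * (v i - v j).

Lemma gopB v1 v2 i : gop (fun j => v1 j - v2 j) i = gop v1 i - gop v2 i.
Proof.
rewrite /gop.
have -> : \sum_(j < N) g i j * (v1 i - v2 i - (v1 j - v2 j)) =
  \sum_(j < N) g i j * (v1 i - v1 j) - \sum_(j < N) g i j * (v2 i - v2 j).
  by rewrite -sumrB; apply: eq_bigr => j _; ring.
ring.
Qed.

Lemma gop_max v : (forall i, i \in U -> gop v i = 0) -> (forall i, i \notin U -> v i = 0) ->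
  forall i, v i <= 0.
Proof.
move=> hom out i0; rewrite leNgt; apply/negP => vi0.
case: (@arg_maxP _ _ _ i0 xpredT v isT) => m _ mmax.
set M := v m.
have Mpos : 0 < M by apply: lt_le_trans vi0 (mmax _ isT).
have key : forall a, a \in U -> v a = M -> c a = 0 /\ forall b, 0 < g a b -> v b = M.
  move=> a aU va.
  have := hom a aU; rewrite /gop va.
  have s0 : 0 <= \sum_(j < N) g a j * (M - v j).
    by apply: sumr_ge0 => j _; apply: mulr_ge0 => //; rewrite subr_ge0; apply: mmax.
  have c0 : 0 <= c a * M by apply: mulr_ge0 => //; apply: ltW.
  move/eqP; rewrite paddr_eq0 // => /andP[/eqP cM /eqP sM]; split.
    by move: cM => /eqP; rewrite mulf_eq0 (gt_eqF Mpos) orbF => /eqP.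
  move=> b gb.
  have := @psumr_eq0P _ _ xpredT _ _ sM b isT.
  move=> /(_ _)/eqP; rewrite mulf_eq0 (gt_eqF gb) /= subr_eq0 => H.
  by apply/eqP; rewrite eq_sym H // => j _; apply: mulr_ge0 => //; rewrite subr_ge0; apply: mmax.
have mU : m \in U by apply: contraT => /out; rewrite -/M => M0; rewrite M0 ltxx in Mpos.
case: (reach mU) => [cpos | [s /and3P [ps als ls]]].
  by have [c0 _] := key m mU erefl; rewrite c0 ltxx in cpos.
have : v m = M by [].
clearbody M.
elim: s m mU ps als ls {mmax} => [|b s IH] a aU /= ps als ls va.
  by rewrite aU in ls.
move: ps als => /andP[gab ps] /andP[_ als].
have vb : v b = M by apply: (key a aU va).2.
case bU : (b \in U).
  by apply: (IH b) => //.
by move: (out b (negbT bU)); rewrite vb => M0; rewrite M0 ltxx in Mpos.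
Qed.

Lemma gop_uniq v : (forall i, i \in U -> gop v i = 0) -> (forall i, i \notin U -> v i = 0) ->
  forall i, v i = 0.
Proof.
move=> hom out i; apply/eqP; rewrite eq_le gop_max //=.
have H : (fun j => 0 - v j) i <= 0.
  apply: (@gop_max (fun j => 0 - v j)) => j jU.
    rewrite gopB hom // /gop mulr0 add0r big1 ?subr0 // => k _.
    by rewrite mulr0.
  by rewrite out // subrr.
by move: H => /=; rewrite sub0r oppr_le0.
Qed.

Definition gmat : 'M[R]_N := \matrix_(i, j)
  (if j \in U then (i == j)%:R * (c j + \sum_(k < N) g j k) - g j i else (i == j)%:R).

Lemma gmatE v j : (\row_i v i *m gmat) 0 j = if j \in U then gop v j else v j.
Proof.
rewrite mxE.
transitivity (\sum_i v i * gmat i j); first by apply: eq_bigr => i _; rewrite mxE.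
rewrite /gmat; case: ifP => jU.
  under eq_bigr do rewrite mxE jU mulrBr.
  set X := c j + _.
  rewrite sumrB.
  have -> : \sum_i v i * ((i == j)%:R * X) = v j * X.
    rewrite (bigD1 j) //= eqxx mul1r big1 ?addr0 // => i /negbTE ->.
    by rewrite mul0r mulr0.
  rewrite /gop /X mulrDr -addrA; congr (_ + _); first by ring.
  rewrite mulr_sumr -sumrB; apply: eq_bigr => k _; ring.
rewrite (bigD1 j) //= !mxE jU eqxx mulr1 big1 ?addr0 // => i /negbTE ij.
by rewrite mxE jU ij mulr0.
Qed.

Lemma gmat_unit : gmat \in unitmx.
Proof.
rewrite -row_free_unit -kermx_eq0; apply/eqP/row_matrixP => i.
rewrite row0.
set r := row i (kermx gmat).
have : r *m gmat = 0 by apply/sub_kermxP; apply: row_sub.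
clearbody r.
have -> : r = \row_k r 0 k by apply/rowP => k; rewrite mxE.
move=> H.
have hv := @gop_uniq (fun k => r 0 k).
apply/rowP => k; rewrite !mxE; apply: hv => l.
  by move=> lU; move/rowP: H => /(_ l); rewrite gmatE lU mxE.
by move=> /negbTE lU; move/rowP: H => /(_ l); rewrite gmatE lU mxE.
Qed.

Definition gsol (b : 'I_N -> R) (i : 'I_N) : R := ((\row_k b k) *m invmx gmat) 0 i.

Lemma gsolP b : (forall i, i \in U -> gop (gsol b) i = b i) /\ (forall i, i \notin U -> gsol b i = b i).
Proof.
have E : forall j, (if j \in U then gop (gsol b) j else gsol b j) = b j.
  move=> j; rewrite -gmatE.
  have -> : \row_i gsol b i = (\row_k b k) *m invmx gmat by apply/rowP => k; rewrite mxE.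
  by rewrite -mulmxA mulVmx ?gmat_unit // mulmx1 mxE.
split=> i iU; have := E i; by rewrite ?iU ?(negbTE iU).
Qed.

End Generic.

Lemma eq_iff_sub (R : realType) (a b c e : R) : a - b = c - e -> (a = b <-> c = e).
Proof.
move=> E; split=> H; apply/eqP; rewrite -subr_eq0.
  by rewrite -E H subrr.
by rewrite E H subrr.
Qed.

Lemma recon (R : realType) (d : nat) (a : R) (y z w : 'rV[R]_d) : a != 0 ->
  a^-1 *: (y - z) = w -> y = z + a *: w.
Proof. by move=> a0 <-; rewrite scalerA mulfV // scale1r addrC subrK. Qed.

Section Geo.
Variables (R : realType) (d N : nat) (dw : R -> R) (h : R) (V : 'I_N -> R)
  (x : 'I_N -> 'rV[R]_d) (r0 : R).
Hypothesis h_pos : 0 < h.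
Hypothesis V_pos : forall i, 0 < V i.
Hypothesis dw_le0 : forall r, 0 <= r -> dw r <= 0.
Hypothesis dw_lt0 : forall r, 0 < r < r0 -> dw r < 0.

Lemma dotvZ (s t : R) (a b : 'rV[R]_d) : dotv (s *: a) (t *: b) = s * t * dotv a b.
Proof. rewrite /dotv mulr_sumr; apply: eq_bigr => l _; rewrite !mxE; ring. Qed.

Lemma dotv0 (a : 'rV[R]_d) : dotv a 0 = 0.
Proof. by rewrite /dotv big1 // => l _; rewrite mxE mulr0. Qed.

Lemma dotv_ge0 (a : 'rV[R]_d) : 0 <= dotv a a.
Proof. by apply: sumr_ge0 => l _; rewrite -expr2 sqr_ge0. Qed.

Definition kappa i j := V j / enorm (x i - x j) *
  dotv ((enorm (x i - x j))^-1 *: (x i - x j)) (gradw dw h (x i) (x j)).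

Lemma kappaE i j : kappa i j =
  (V j / enorm (x i - x j) * (enorm (x i - x j))^-1 * (enorm (x i - x j))^-1
     * dotv (x i - x j) (x i - x j)) * dwh d dw h (enorm (x i - x j)).
Proof.
rewrite /kappa /gradw; case: eqP => [->|_].
  by rewrite subrr !dotv0 !(mulr0, mul0r).
by rewrite dotvZ; ring.
Qed.

Lemma kappa_ii i : kappa i i = 0.
Proof. by rewrite /kappa /gradw eqxx dotv0 mulr0. Qed.

Lemma dwh_le0 r : 0 <= r -> dwh d dw h r <= 0.
Proof.
move=> r0'; rewrite /dwh; apply: mulr_ge0_le0.
  by rewrite invr_ge0 exprn_ge0 // ltW.
by apply: dw_le0; rewrite divr_ge0 // ltW.
Qed.

Lemma kappa_le0 i j : kappa i j <= 0.
Proof.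
rewrite kappaE; apply: mulr_ge0_le0; last by apply: dwh_le0; rewrite /enorm sqrtr_ge0.
have e0 : 0 <= (enorm (x i - x j))^-1 by rewrite invr_ge0 /enorm sqrtr_ge0.
apply: mulr_ge0; last exact: dotv_ge0.
apply: mulr_ge0 => //; apply: mulr_ge0 => //; apply: mulr_ge0 => //.
exact: ltW.
Qed.

Lemma kappa_lt0 i j : near_rel h x r0 i j -> kappa i j < 0.
Proof.
rewrite /near_rel => /andP[D0 Dr].
rewrite kappaE pmulr_rlt0.
  rewrite /dwh pmulr_rlt0; last by rewrite invr_gt0 exprn_gt0.
  by apply: dw_lt0; rewrite divr_gt0 //= ltr_pdivrMr.
have e0 : 0 < (enorm (x i - x j))^-1 by rewrite invr_gt0.
have dp : 0 < dotv (x i - x j) (x i - x j) by move: D0; rewrite /enorm sqrtr_gt0.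
by apply: mulr_gt0 => //; apply: mulr_gt0 => //; apply: mulr_gt0 => //; apply: mulr_gt0.
Qed.

Lemma lapv_comp (v : 'I_N -> 'rV[R]_d) i l :
  (lap_v dw h V x v i) 0 l = 2 * \sum_(j < N) kappa i j * (v i 0 l - v j 0 l).
Proof.
rewrite /lap_v mxE summxE; congr (2 * _).
rewrite [RHS](bigD1 i) //= subrr mulr0 add0r; apply: eq_bigr => j _.
by rewrite !mxE.
Qed.

Lemma lapp_eq (FS : {set 'I_N}) (p : 'I_N -> R) i :
  lap_p dw h V x FS p i = 2 * \sum_(j < N) (if j \in FS then kappa i j else 0) * (p i - p j).
Proof.
rewrite /lap_p; congr (2 * _); rewrite big_mkcond; apply: eq_bigr => j _.
case: (j \in FS) => /=; last by rewrite mul0r.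
case: eqVneq => [->|_] /=; first by rewrite subrr mulr0.
rewrite /kappa; ring.
Qed.

End Geo.

Section Core.
Variables (R : realType) (d N : nat) (dw : R -> R) (h : R) (V : 'I_N -> R)
  (x : 'I_N -> 'rV[R]_d) (r0 : R).
Hypothesis h_pos : 0 < h.
Hypothesis V_pos : forall i, 0 < V i.
Hypothesis dw_le0 : forall r, 0 <= r -> dw r <= 0.
Hypothesis dw_lt0 : forall r, 0 < r < r0 -> dw r < 0.
Variables (LF LS LW : {set 'I_N}) (rho nu dt : R) (fk uk : 'I_N -> 'rV[R]_d).
Hypothesis rho_pos : 0 < rho.
Hypothesis nu_pos : 0 < nu.
Hypothesis dt_pos : 0 < dt.
Hypothesis cover : forall i, i \in LF :|: LS :|: LW.
Hypothesis dFS : forall i, i \in LF -> i \notin LS.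
Hypothesis dFW : forall i, i \in LF -> i \notin LW.
Hypothesis dSW : forall i, i \in LS -> i \notin LW.
Hypothesis hcon : h_connected h x r0 LF LS LW.

Local Notation FS := (LF :|: LS).
Local Notation ka := (kappa dw h V x).

Lemma W_notFS i : i \in LW -> i \notin FS.
Proof.
move=> iW; rewrite !inE negb_or; apply/andP; split.
  by apply: contraL iW => /dFW.
by apply: contraL iW => /dSW.
Qed.

Lemma notFS_W i : i \notin FS -> i \in LW.
Proof. by move: (cover i); rewrite !inE; case: (i \in LF); case: (i \in LS). Qed.

Definition Bt implicit ut := (forall i, i \in FS ->
     dt^-1 *: (ut i - uk i) = nu *: lap_v dw h V x (if implicit then ut else uk) i + fk i) /\
  (forall i, i \in LW -> ut i = 0).

Definition cb (i : 'I_N) : R := dt^-1.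
Definition gb (i j : 'I_N) : R := - (2 * nu * ka i j).

Lemma gb_ge0 i j : 0 <= gb i j.
Proof.
rewrite /gb oppr_ge0; apply: mulr_ge0_le0; last by apply: kappa_le0.
by rewrite mulr_ge0 // ltW.
Qed.

Lemma cb_ge0 i : 0 <= cb i.
Proof. by rewrite /cb invr_ge0 ltW. Qed.

Lemma reach_b i : i \in FS -> 0 < cb i \/
  exists s, [&& path (fun a b => 0 < gb a b) i s,
                all (fun j => j \in FS) (belast i s) & last i s \notin FS].
Proof. by move=> _; left; rewrite /cb invr_gt0. Qed.

Lemma gop_b (w : 'I_N -> R) i :
  gop cb gb w i = dt^-1 * w i - nu * (2 * \sum_(j < N) ka i j * (w i - w j)).
Proof.
rewrite /gop /cb; congr (_ + _).
rewrite !mulr_sumr -sumrN; apply: eq_bigr => j _; rewrite /gb; ring.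
Qed.

Lemma beq_iff (ut : 'I_N -> 'rV[R]_d) i :
  (dt^-1 *: (ut i - uk i) = nu *: lap_v dw h V x ut i + fk i) <->
  (forall l, gop cb gb (fun j => ut j 0 l) i = dt^-1 * uk i 0 l + fk i 0 l).
Proof.
have LL := lapv_comp dw h V x ut i.
move: (lap_v dw h V x ut i) LL => L LL.
split.
  move=> E l; move/rowP: E => /(_ l); rewrite !mxE LL gop_b => H.
  by apply: (proj1 (eq_iff_sub _) H); ring.
move=> E; apply/rowP => l; move: (E l); rewrite !mxE LL gop_b => H.
by apply: (proj1 (eq_iff_sub _) H); ring.
Qed.

Lemma Bt_impl : (exists ut, Bt true ut) /\
  (forall ut1 ut2, Bt true ut1 -> Bt true ut2 -> ut1 = ut2).
Proof.
split.
  pose bl (l : 'I_d) i := if i \in FS then dt^-1 * uk i 0 l + fk i 0 l else 0.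
  exists (fun i => \row_l gsol FS cb gb (bl l) i); split.
    move=> i iF /=; apply/beq_iff => l.
    have -> : (fun j => (\row_l0 gsol FS cb gb (bl l0) j) 0 l) = gsol FS cb gb (bl l).
      by apply: funext => j; rewrite mxE.
    have [H _] := gsolP cb_ge0 gb_ge0 reach_b (bl l).
    by rewrite H // /bl iF.
  move=> i /W_notFS iF; apply/rowP => l; rewrite !mxE.
  have [_ H] := gsolP cb_ge0 gb_ge0 reach_b (bl l).
  by rewrite H // /bl (negbTE iF).
move=> ut1 ut2 [E1 W1] [E2 W2]; apply: funext => i; apply/rowP => l.
apply/eqP; rewrite -subr_eq0; apply/eqP.
apply: (gop_uniq (U:=FS) (c:=cb) (g:=gb) cb_ge0 gb_ge0 reach_b (v:=fun j => ut1 j 0 l - ut2 j 0 l)).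
  move=> j jF; rewrite gopB.
  by have := (proj1 (beq_iff ut1 j) (E1 j jF) l); have := (proj1 (beq_iff ut2 j) (E2 j jF) l);
    move=> -> ->; rewrite subrr.
by move=> j /notFS_W jW; rewrite W1 // W2 // !mxE subrr.
Qed.

Lemma Bt_semi : (exists ut, Bt false ut) /\
  (forall ut1 ut2, Bt false ut1 -> Bt false ut2 -> ut1 = ut2).
Proof.
have dt0 : dt != 0 by rewrite gt_eqF.
split.
  exists (fun i => if i \in FS then uk i + dt *: (nu *: lap_v dw h V x uk i + fk i) else 0).
  split=> i; first by move=> -> /=; rewrite addrC addKr scalerA mulVf // scale1r.
  by move/W_notFS/negbTE => ->.
move=> ut1 ut2 [E1 W1] [E2 W2]; apply: funext => i.
case iF : (i \in FS).
  by rewrite (recon dt0 (E1 i iF)) (recon dt0 (E2 i iF)).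
by have iW := notFS_W (negbT iF); rewrite W1 // W2.
Qed.


Definition gp (i j : 'I_N) : R := if j \in FS then - (2 * ka i j) else 0.
Definition cp (i : 'I_N) : R := 0.

Lemma gp_ge0 i j : 0 <= gp i j.
Proof.
rewrite /gp; case: ifP => // _; rewrite oppr_ge0 pmulr_rle0 //.
by apply: kappa_le0.
Qed.

Lemma cp_ge0 i : 0 <= cp i.
Proof. by []. Qed.

Lemma conv_path i s : path (near_rel h x r0) i s -> all (fun j => j \in LF) (belast i s) ->
  last i s \in LS -> path (fun a b => 0 < gp a b) i s.
Proof.
elim: s i => [|b s IH] i //= /andP[nib ps] /andP[_ al] ls.
apply/andP; split; last exact: IH.
have bFS : b \in FS.
  case: s {IH ps} al ls => [|c s] /=; first by move=> _ bS; rewrite inE bS orbT.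
  by move=> /andP[bF _] _; rewrite inE bF.
rewrite /gp bFS oppr_gt0 pmulr_rlt0 //.
by apply: (kappa_lt0 (r0:=r0)).
Qed.

Lemma reach_p i : i \in LF -> 0 < cp i \/
  exists s, [&& path (fun a b => 0 < gp a b) i s,
                all (fun j => j \in LF) (belast i s) & last i s \notin LF].
Proof.
move=> iF; right; have [[s /and3P[ps al ls]] _] := hcon iF.
exists s; apply/and3P; split => //; first exact: conv_path.
by apply: contraL ls => /dFS.
Qed.

Lemma gop_p (p : 'I_N -> R) i : gop cp gp p i = - lap_p dw h V x FS p i.
Proof.
rewrite lapp_eq /gop /cp mul0r add0r mulr_sumr -sumrN; apply: eq_bigr => j _.
rewrite /gp; case: (j \in FS); ring.
Qed.

Definition Cp (ut : 'I_N -> 'rV[R]_d) p :=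
  (forall i, i \in LF -> lap_p dw h V x FS p i = rho / dt * div_v dw h V x ut i) /\
  (forall i, i \in LS -> p i = 0).

Lemma Cp_sol ut : (exists p, Cp ut p) /\
  (forall p1 p2, Cp ut p1 -> Cp ut p2 -> forall i, i \in FS -> p1 i = p2 i).
Proof.
split.
  pose b i := if i \in LF then - (rho / dt * div_v dw h V x ut i) else 0.
  have [H1 H2] := gsolP cp_ge0 gp_ge0 reach_p b.
  exists (gsol LF cp gp b); split.
    by move=> i iF; apply: oppr_inj; rewrite -gop_p H1 // /b iF.
  move=> i iS; have iS' : i \notin LF by exact: (contraL (@dFS i) iS).
  by rewrite H2 // /b (negbTE iS').
move=> p1 p2 [C1 S1] [C2 S2].
pose v j := if j \in FS then p1 j - p2 j else 0.
have v0 := gop_uniq cp_ge0 gp_ge0 reach_p (v := v).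
move=> i iF; apply/eqP; rewrite -subr_eq0; apply/eqP.
have := v0 _ _ i; rewrite /v iF; apply.
  move=> j jF.
  have jFS : j \in FS by rewrite inE jF.
  have -> : gop cp gp v j = gop cp gp p1 j - gop cp gp p2 j.
    rewrite /gop /cp !mul0r !add0r -sumrB; apply: eq_bigr => k _.
    rewrite /v /gp jFS; case: (k \in FS); ring.
  by rewrite !gop_p C1 // C2 // subrr.
move=> j jF; rewrite /v; case: ifP => // jFS.
have jS : j \in LS by move: jFS; rewrite inE (negbTE jF).
by rewrite S1 // S2 // subrr.
Qed.

Definition Dn (ut : 'I_N -> 'rV[R]_d) p un :=
  (forall i, i \in FS ->
     dt^-1 *: (un i - ut i) = - (rho^-1 *: grad_p dw h V x FS p i)) /\
  (forall i, i \in LW -> un i = 0).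

Lemma Dn_sol ut p : (exists un, Dn ut p un) /\
  (forall p', (forall i, i \in FS -> p i = p' i) ->
   forall un1 un2, Dn ut p un1 -> Dn ut p' un2 -> un1 = un2).
Proof.
have dt0 : dt != 0 by rewrite gt_eqF.
split.
  exists (fun i => if i \in FS then ut i + dt *: (- (rho^-1 *: grad_p dw h V x FS p i)) else 0).
  split=> i; first by move=> -> /=; rewrite addrC addKr scalerA mulVf // scale1r.
  by move/W_notFS/negbTE => ->.
move=> p' pp un1 un2 [E1 W1] [E2 W2]; apply: funext => i.
case iF : (i \in FS).
  rewrite (recon dt0 (E1 i iF)) (recon dt0 (E2 i iF)).
  suff -> : grad_p dw h V x FS p i = grad_p dw h V x FS p' i by [].
  by apply: eq_bigr => j jF; rewrite pp // pp.
by have iW := notFS_W (negbT iF); rewrite W1 // W2.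
Qed.

Lemma us_core implicit : (exists ut, Bt implicit ut) ->
  (forall ut1 ut2, Bt implicit ut1 -> Bt implicit ut2 -> ut1 = ut2) ->
  uniquely_solvable dw h V x implicit LF LS LW rho nu dt fk uk.
Proof.
move=> [ut Hut] Hu; split.
  have [[p Hp] _] := Cp_sol ut.
  have [[un Hun] _] := Dn_sol ut p.
  exists ut, p, un.
  by case: Hut => [? ?]; case: Hp => [? ?]; case: Hun => [? ?].
move=> ut1 p1 un1 ut2 p2 un2 [B1 [W1 [C1 [S1 [D1 X1]]]]] [B2 [W2 [C2 [S2 [D2 X2]]]]].
have e : ut1 = ut2 by apply: Hu.
subst ut2.
have pp := (Cp_sol ut1).2 p1 p2 (conj C1 S1) (conj C2 S2).
split => //; split => //.
exact: (Dn_sol ut1 p1).2 p2 pp un1 un2 (conj D1 X1) (conj D2 X2).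
Qed.

Lemma us_both : uniquely_solvable dw h V x true LF LS LW rho nu dt fk uk /\
  uniquely_solvable dw h V x false LF LS LW rho nu dt fk uk.
Proof.
split; apply: us_core.
- exact: Bt_impl.1.
- exact: Bt_impl.2.
- exact: Bt_semi.1.
- exact: Bt_semi.2.
Qed.

End Core.
Unset Implicit Arguments.
Theorem theorem1 (R : realType) (d : nat) (hd : (d == 2%N) || (d == 3%N))
  (Omega : set 'rV[R]_d) (Omega_open : open Omega) (Omega_conn : connected Omega)
  (Omega_bdd : bounded_set Omega) (volOmega : R) (volOmega_pos : 0 < volOmega)
  (rho nu T : R) (rho_pos : 0 < rho) (nu_pos : 0 < nu) (T_pos : 0 < T)
  (f : 'rV[R]_d -> R -> 'rV[R]_d) (u0 : 'rV[R]_d -> 'rV[R]_d)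
  (dt : R) (dt_pos : 0 < dt)
  (w dw : R -> R) (r0 : R) (hw : weight_fun d w dw r0)
  (h : R) (h_pos : 0 < h)
  (N : nat) (V : 'I_N -> R) (V_pos : forall i, 0 < V i)
  (V_sum : \sum_(i < N) V i = volOmega)
  (x : nat -> 'I_N -> 'rV[R]_d) (LF LS LW : nat -> {set 'I_N}) :
  let K := Num.truncn (T / dt) in
  (forall k, (k < K)%N ->
     [/\ (forall i, closure Omega (x k i)),
         (forall i j, i != j -> x k i != x k j),
         (exists i j, i != j /\ enorm (x k i - x k j) < r0 * h),
         [/\ (forall i, i \in LF k :|: LS k :|: LW k), (forall i, i \in LF k -> i \notin LS k),
             (forall i, i \in LF k -> i \notin LW k) & (forall i, i \in LS k -> i \notin LW k)]
       & h_connected h (x k) r0 (LF k) (LS k) (LW k)]) ->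
  forall k, (k < K)%N ->
  let fk := fun i : 'I_N =>
    if i \in LW k then 0 else f (x k i) (k%:R * dt) in
  forall uk : 'I_N -> 'rV[R]_d,
    uniquely_solvable dw h V (x k) true (LF k) (LS k) (LW k) rho nu dt fk uk /\
    uniquely_solvable dw h V (x k) false (LF k) (LS k) (LW k) rho nu dt fk uk.
Proof.
move=> K Hk k kK fk uk.
have [_ [_ [_ [_ [dlt [d0 [dge _]]]]]]] := hw.
have dle : forall r, 0 <= r -> dw r <= 0.
  move=> r; rewrite le0r => /orP[/eqP->|rp]; first by rewrite d0.
  case: (ltP r r0) => [rr|rr]; first by apply/ltW/dlt; rewrite rp rr.
  by rewrite dge.
have [_ _ _ [cov dFS dFW dSW] hc] := Hk k kK.
by apply: (us_both (r0:=r0)).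
Qed.
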